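(* Let $D\subset\mathbb N^n$ be finite, not contained in any coordinate hyperplane, $p$ a prime, and $\mathbf e,\mathbf e'\in\Sigma_p(D)$ with $V(\mathbf e,\mathbf e')\ne\emptyset$. Then all $V=(v_{\mathbf d})\in V(\mathbf e,\mathbf e')$ have the same weight $w(V)=\sum_{\mathbf d}v_{\mathbf d}$.
   Context: $s_p$ = base-$p$ digit sum. $E_{D,p}(r)$ = set of $U=(u_{\mathbf d})\in\{0,\dots,p^r-1\}^D$ with $\sum u_{\mathbf d}\mathbf d\equiv0\pmod{p^r-1}$ and all coordinates of $\sum u_{\mathbf d}\mathbf d$ positive; $s_p(U)=\sum s_p(u_{\mathbf d})$; $\delta_p(D)=\frac1{p-1}\min_{r\ge1}\min_{U\in E_{D,p}(r)}s_p(U)/r$; minimal means $s_p(U)=(p-1)r\delta_p(D)$. Shift $\delta_r$: $k\mapsto pk\bmod(p^r-1)$ for $k\le p^r-2$, $p^r-1\mapsto p^r-1$, coordinatewise. $\varphi_U(k)=\frac1{p^r-1}\sum\mathbf d(\delta_r^kU)_{\mathbf d}$, $k\in\mathbb Z/r\mathbb Z$; irreducible means $\varphi_U$ injective; $MI_{D,p}$ = minimal irreducible elements of all lengths; $\Sigma_p(D)=\bigcup_{U\in MI_{D,p}}\mathrm{Im}\varphi_U$. $\psi(U)=(u_{\mathbf d}\bmod p)_{\mathbf d}$; $V(\mathbf e,\mathbf e')=\{\psi(U):U\in MI_{D,p},\varphi_U(-1)=\mathbf e,\varphi_U(0)=\mathbf e'\}\subset\{0,\dots,p-1\}^D$. 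*)

(* Defs.v *)
From mathcomp Require Import all_boot.
Unset Printing Implicit Defensive.

(* base-p digit sum s_p(k) (for p >= 2 the terms with p^i > k vanish) *)
Definition sp (p k : nat) : nat := \sum_(i < k.+1) ((k %/ p ^ i) %% p).

Section Defs.
Variables (n : nat) (D : seq (n.-tuple nat)) (p : nat).

Notation m := (size D).
Definition dD (i : 'I_m) : n.-tuple nat := tnth (in_tuple D) i.

(* U = (u_d)_{d in D} is a finite function on the indices of D *)
Definition vsum (U : {ffun 'I_m -> nat}) (j : 'I_n) : nat :=
  \sum_(i < m) U i * tnth (dD i) j.

Definition inE (r : nat) (U : {ffun 'I_m -> nat}) : Prop :=
  [/\ 1 <= r,
      (forall i, U i <= p ^ r - 1),
      (forall j, vsum U j = 0 %[mod p ^ r - 1]) &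
      (forall j, 0 < vsum U j)].

Definition spU (U : {ffun 'I_m -> nat}) : nat := \sum_(i < m) sp p (U i).

(* minimal: s_p(U)/r attains min over all r' >= 1, U' in E(r') of s_p(U')/r'
   (equivalently s_p(U) = (p-1) r delta_p(D)) *)
Definition minimalU (r : nat) (U : {ffun 'I_m -> nat}) : Prop :=
  inE r U /\
  forall r' (U' : {ffun 'I_m -> nat}), inE r' U' -> spU U * r' <= spU U' * r.

Definition shiftr (r k : nat) : nat :=
  if k <= p ^ r - 2 then (p * k) %% (p ^ r - 1) else p ^ r - 1.

Definition shiftU (r : nat) (U : {ffun 'I_m -> nat}) : {ffun 'I_m -> nat} :=
  [ffun i => shiftr r (U i)].

(* phi_U(k) for k a representative in nat of k mod r *)
Definition phiU (r : nat) (U : {ffun 'I_m -> nat}) (k : nat) : n.-tuple nat :=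
  [tuple vsum (iter (k %% r) (shiftU r) U) j %/ (p ^ r - 1) | j < n].

Definition irreducibleU (r : nat) (U : {ffun 'I_m -> nat}) : Prop :=
  forall k k', k < r -> k' < r -> phiU r U k = phiU r U k' -> k = k'.

Definition inMI (r : nat) (U : {ffun 'I_m -> nat}) : Prop :=
  minimalU r U /\ irreducibleU r U.

Definition inSigma (e : n.-tuple nat) : Prop :=
  exists r U k, inMI r U /\ phiU r U k = e.

Definition psi (U : {ffun 'I_m -> nat}) : {ffun 'I_m -> nat} :=
  [ffun i => U i %% p].

(* V(e, e'); phi_U(-1) = phi_U(r-1) *)
Definition inV (e e' : n.-tuple nat) (V : {ffun 'I_m -> nat}) : Prop :=
  exists r U, [/\ inMI r U, phiU r U (r - 1) = e, phiU r U 0 = e' & V = psi U].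

Definition weight (V : {ffun 'I_m -> nat}) : nat := \sum_(i < m) V i.

End Defs.
Arguments inSigma {n} D p e.
Arguments inV {n} D p e e' V.
Arguments weight {n D} V.

(* Main.v *)
Require Import Defs.
From mathcomp Require Import all_boot zify.


Lemma spN_eq p m N : 1 < p -> m <= N ->
  \sum_(i < N) ((m %/ p ^ i) %% p) = sp p m.
Proof.
move=> p1; elim: N => [|N IH] hN.
  have -> : m = 0 by lia.
  by rewrite big_ord0 /sp big_ord_recl big_ord0 div0n mod0n.
case: (leqP m N) => [le|gt].
  rewrite big_ord_recr /= IH // divn_small ?mod0n ?addn0 //.
  by apply: leq_ltn_trans le (ltn_expl _ p1).
have eq : m = N.+1 by lia.
rewrite eq /sp [in RHS]big_ord_recr /= divn_small ?mod0n ?addn0 //.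
exact: ltn_expl.
Qed.

Lemma sp_rec p k : 1 < p -> sp p k = k %% p + sp p (k %/ p).
Proof.
move=> p1; case: k => [|k]; first by rewrite div0n mod0n.
rewrite {1}/sp big_ord_recl expn0 divn1; congr (_ + _).
have h : k.+1 %/ p <= k.+1 by apply: leq_div.
rewrite -(spN_eq _ _ _ p1 h).
apply: eq_bigr => i _; by rewrite /= expnS divnMA.
Qed.

Lemma sp_digit p q v : 1 < p -> v < p -> sp p (p * q + v) = sp p q + v.
Proof.
move=> p1 vp; rewrite (@sp_rec p _ p1) addnC.
have p0 : 0 < p by apply: ltnW.
rewrite mulnC modnMDl modn_small // divnMDl // divn_small // addn0.
by rewrite addnC.
Qed.

Section Shift.
Variables (p r : nat).
Hypotheses (p1 : 1 < p) (r0 : 0 < r).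
Local Notation M := (p ^ r - 1).
Local Notation T := (shiftr p r).

Lemma Mpos : 0 < M.
Proof. have := ltn_expl r p1; lia. Qed.

Lemma MP : M + 1 = p * p ^ r.-1.
Proof. rewrite -expnS prednK //; have := ltn_expl r p1; lia. Qed.

Lemma T_lt k : k < M -> T k = (p * k) %% M.
Proof. move=> h; rewrite /shiftr ifT //; lia. Qed.

Lemma T_M : T M = M.
Proof. move: Mpos => hM; rewrite /shiftr; case: ifP => // H; lia. Qed.

Lemma T_le k : k <= M -> T k <= M.
Proof.
move=> h; case: (ltngtP k M) => [lt|gt|->]; last by rewrite T_M.
  by rewrite T_lt // ltnW // ltn_mod Mpos.
lia.
Qed.

Lemma T_ltM k : k < M -> T k < M.
Proof. by move=> h; rewrite T_lt // ltn_mod Mpos. Qed.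

Lemma T_mod k : k <= M -> T k = p * k %[mod M].
Proof.
move=> h; case: (ltngtP k M) => [lt|gt|->]; last by rewrite T_M modnn modnMl.
  by rewrite T_lt // modn_mod.
lia.
Qed.

Lemma T_key k : k <= M -> T k + M * (T k %% p) = p * k.
Proof.
move=> h; case: (ltngtP k M) => [lt|gt|->]; last first.
- rewrite T_M.
  have -> : M %% p = p - 1.
    have e : M = p * (p ^ r.-1 - 1) + (p - 1).
      have := MP; have := ltn_expl r.-1 p1; nia.
    rewrite e mulnC modnMDl modn_small //; lia.
  nia.
- lia.
rewrite T_lt //.
set t := (p * k) %% M; set q := (p * k) %/ M.
have E : p * k = q * M + t by rewrite /t /q -divn_eq.
have tM : t < M by rewrite /t ltn_mod Mpos.
have qp : q < p.
  have : q * M < p * M by nia.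
  by rewrite ltn_pmul2r ?Mpos.
have E2 : t + q * p ^ r.-1 * p = k * p + q.
  have := MP; nia.
have -> : t %% p = q.
  have h1 : (t + q * p ^ r.-1 * p) %% p = t %% p by rewrite addnC modnMDl.
  have h2 : (k * p + q) %% p = q by rewrite modnMDl modn_small.
  by rewrite -h1 E2 h2.
nia.
Qed.

Lemma iterT k u : u <= M ->
  [/\ iter k T u <= M, (iter k T u == M) = (u == M) &
      iter k T u = p ^ k * u %[mod M]].
Proof.
move=> h; elim: k => [|k [IH1 IH2 IH3]]; first by rewrite mul1n.
rewrite iterS; split.
- exact: T_le.
- case: (ltngtP (iter k T u) M) => [lt|gt|eq].
  + have := T_ltM _ lt; move: IH2; rewrite (ltn_eqF lt) => <-; lia.
  + lia.
  + by rewrite eq T_M eqxx -IH2 eq eqxx.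
- by rewrite T_mod // -modnMmr IH3 modnMmr expnS mulnA.
Qed.

Lemma iterT_r u : u <= M -> iter r T u = u.
Proof.
move=> h; have [H1 H2 H3] := iterT r _ h.
have e : p ^ r * u = u %[mod M].
  have -> : p ^ r * u = u * M + u.
    have -> : p ^ r = M + 1 by have := Mpos; lia.
    nia.
  by rewrite modnMDl.
case: (ltngtP u M) => [lt|gt|eq].
- have lt' : iter r T u < M.
    have := H1; move: H2; rewrite (ltn_eqF lt); lia.
  by rewrite -[RHS](modn_small lt) -[LHS](modn_small lt') H3 e.
- lia.
- by rewrite eq in H2 *; apply/eqP; rewrite H2.
Qed.

End Shift.

Section Main.
Variables (n : nat) (D : seq (n.-tuple nat)) (p : nat).
Hypothesis p1 : 1 < p.
Local Notation m := (size D).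

Lemma vsum_lin (A B C : {ffun 'I_m -> nat}) j :
  (forall i, A i = p * B i + C i) -> vsum n D A j = p * vsum n D B j + vsum n D C j.
Proof.
move=> h; rewrite /vsum big_distrr -big_split /=; apply: eq_bigr => i _.
by rewrite h mulnDl mulnA.
Qed.

Lemma iter_shiftU r k (U : {ffun 'I_m -> nat}) :
  iter k (shiftU n D p r) U = [ffun i => iter k (shiftr p r) (U i)].
Proof.
elim: k => [|k IH]; first by apply/ffunP => i; rewrite ffunE.
by rewrite iterS IH; apply/ffunP => i; rewrite !ffunE.
Qed.

Lemma mi_rel r U e e' : minimalU n D p r U ->
  phiU n D p r U (r - 1) = e -> phiU n D p r U 0 = e' ->
  forall j, vsum n D (psi n D p U) j + tnth e' j = p * tnth e j.
Proof.
move=> [[r0 Ule Ucong Upos] _] He He' j.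
set M := p ^ r - 1.
have M0 : 0 < M := Mpos _ _ p1 r0.
set W := iter (r - 1) (shiftU n D p r) U.
have Wi : forall i, W i = iter (r - 1) (shiftr p r) (U i).
  by move=> i; rewrite /W iter_shiftU ffunE.
have TW : forall i, shiftr p r (W i) = U i.
  move=> i; rewrite Wi.
  have -> : shiftr p r (iter (r - 1) (shiftr p r) (U i)) = iter (r - 1).+1 (shiftr p r) (U i) by [].
  have -> : (r - 1).+1 = r by lia.
  exact: (iterT_r _ _ p1 r0 _ (Ule i)).
have WM : forall i, W i <= M.
  by move=> i; rewrite Wi; have [] := iterT _ _ p1 r0 (r - 1) _ (Ule i).
have S : vsum n D U j + M * vsum n D (psi n D p U) j = p * vsum n D W j.
  rewrite /vsum big_distrr big_distrr -big_split /=; apply: eq_bigr => i _.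
  rewrite ffunE mulnA -mulnDl mulnA -(T_key _ _ p1 r0 _ (WM i)) TW //.
have WU : vsum n D W j %% M = 0.
  rewrite /vsum -modn_summ.
  rewrite (eq_bigr (fun i => (p ^ (r - 1) * (U i * tnth (dD n D i) j)) %% M)); last first.
    move=> i _; rewrite -modnMml Wi.
    have [_ _ ->] := iterT _ _ p1 r0 (r - 1) _ (Ule i).
    by rewrite modnMml mulnA.
  rewrite modn_summ -big_distrr /= -modnMmr.
  have := Ucong j; rewrite /vsum => ->; by rewrite mod0n muln0 mod0n.
have Ee : tnth e j = vsum n D W j %/ M.
  rewrite -He /phiU tnth_mktuple modn_small //; lia.
have Ee' : tnth e' j = vsum n D U j %/ M.
  by rewrite -He' /phiU tnth_mktuple mod0n.
have EU : vsum n D U j = tnth e' j * M.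
  have hU : vsum n D U j %% M = 0 by move: (Ucong j); rewrite mod0n.
  by rewrite Ee' {1}(divn_eq (vsum n D U j) M) hU addn0.
have EW : vsum n D W j = tnth e j * M.
  by rewrite Ee {1}(divn_eq (vsum n D W j) M) WU addn0.
rewrite EU EW in S.
apply/eqP; rewrite -(eqn_pmul2l M0); apply/eqP; nia.
Qed.

Lemma swap r U V2 : minimalU n D p r U ->
  (forall j, vsum n D (psi n D p U) j = vsum n D V2 j) ->
  (forall i, V2 i < p) ->
  weight (psi n D p U) <= weight V2.
Proof.
move=> [[r0 Ule Ucong Upos] Hmin] Hv HV2.
have p0 : 0 < p by apply: ltnW.
set Q := [ffun i => U i %/ p].
set U' := [ffun i => p * Q i + V2 i].
have HU : forall i, U i = p * Q i + psi n D p U i.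
  by move=> i; rewrite !ffunE mulnC -divn_eq.
have Hs : forall j, vsum n D U' j = vsum n D U j.
  move=> j; rewrite (@vsum_lin _ Q V2 j); last by move=> i; rewrite ffunE.
  by rewrite (@vsum_lin _ Q (psi n D p U) j HU) Hv.
have inE' : Defs.inE n D p r U'.
  split => //.
  - move=> i; rewrite ffunE.
    have h1 := Ule i; rewrite HU in h1.
    have h2 := HV2 i.
    have hP : p ^ r = p * p ^ r.-1 by rewrite -expnS prednK.
    have : p * Q i < p * p ^ r.-1 by rewrite -hP; lia.
    rewrite ltn_pmul2l // => hq.
    nia.
  - by move=> j; rewrite Hs.
  - by move=> j; rewrite Hs.
have := Hmin r U' inE'; rewrite leq_pmul2r //.
have E1 : spU n D p U = \sum_(i < m) sp p (Q i) + weight (psi n D p U).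
  rewrite /spU /weight -big_split /=; apply: eq_bigr => i _.
  rewrite {1}HU sp_digit // ffunE ltn_mod //.
have E2 : spU n D p U' = \sum_(i < m) sp p (Q i) + weight V2.
  rewrite /spU /weight -big_split /=; apply: eq_bigr => i _.
  by rewrite ffunE sp_digit.
rewrite E1 E2 leq_add2l //.
Qed.

End Main.

Theorem lemma2p15 (n : nat) (D : seq (n.-tuple nat)) (p : nat) :
  uniq D ->
  (forall j : 'I_n, exists2 d, d \in D & tnth d j != 0) ->
  prime p ->
  forall e e' : n.-tuple nat,
    inSigma D p e -> inSigma D p e' ->
    (exists V, inV D p e e' V) ->
    forall V1 V2, inV D p e e' V1 -> inV D p e e' V2 ->
      weight V1 = weight V2.
Proof.
move=> _ _ pp e e' _ _ _ V1 V2 [r1 [U1 [[m1 _] h1 h1' ->]]] [r2 [U2 [[m2 _] h2 h2' ->]]].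
have p1 : 1 < p := prime_gt1 pp.
have p0 : 0 < p by apply: ltnW.
have R1 := @mi_rel n D p p1 _ _ _ _ m1 h1 h1'.
have R2 := @mi_rel n D p p1 _ _ _ _ m2 h2 h2'.
have Hv : forall j, vsum n D (psi n D p U1) j = vsum n D (psi n D p U2) j.
  move=> j; have := R1 j; rewrite -(R2 j); lia.
apply/eqP; rewrite eqn_leq; apply/andP; split.
- apply: (@swap n D p p1 _ _ _ m1 Hv) => i; by rewrite ffunE ltn_mod.
- apply: (@swap n D p p1 _ _ _ m2) => [j|i]; first by rewrite Hv.
  by rewrite ffunE ltn_mod.
Qed.
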